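(* For every integer $n\ge0$, $$\sum_{k=0}^{n}\lambda^{n-k}B^{(c)}_{k,\lambda}(x,y)S_2(n,k)=\sum_{m=0}^{n}\sum_{l=0}^{\lfloor m/2\rfloor}\frac{\lambda^{n-m}}{n-m+1}\binom{n}{m}\binom{m}{2l}(-1)^l y^{2l}B_{m-2l}(x).$$
   Context: Let $\lambda$ be a nonzero real number; generating functions are formal power series in $t$. $e_\lambda^{x}(t)=(1+\lambda t)^{x/\lambda}$ and $\cos_\lambda^{(y)}(t)=\cos\!\big(\tfrac{y}{\lambda}\log(1+\lambda t)\big)$. The type 2 degenerate cosine-Bernoulli polynomials are defined by $\frac{t}{e_\lambda^{1/2}(t)-e_\lambda^{-1/2}(t)}e_\lambda^{x}(t)\cos_\lambda^{(y)}(t)=\sum_{n\ge0}B^{(c)}_{n,\lambda}(x,y)\frac{t^n}{n!}$. The (non-degenerate) type 2 Bernoulli polynomials are defined by $\frac{t}{e^{t/2}-e^{-t/2}}e^{xt}=\sum_{n\ge0}B_n(x)\frac{t^n}{n!}$. $S_2(n,k)$ are the Stirling numbers of the second kind, $\frac{1}{k!}(e^t-1)^k=\sum_{n\ge k}S_2(n,k)\frac{t^n}{n!}$. *)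

(* Defs.v *)
(* Formal power series in t over a real field R are
   represented by their coefficient sequences  nat -> R. *)
From HB Require Import structures.
From mathcomp Require Import all_boot all_order all_algebra.
Set Implicit Arguments. Unset Strict Implicit. Unset Printing Implicit Defensive.
Import Order.TTheory GRing.Theory Num.Theory.
Local Open Scope ring_scope.

Section FPS.
Variable R : realFieldType.

Definition fps := nat -> R.

Definition fps_one : fps := fun n => (n == 0%N)%:R.
Definition fps_X : fps := fun n => (n == 1%N)%:R.
Definition fps_add (a b : fps) : fps := fun n => a n + b n.
Definition fps_sub (a b : fps) : fps := fun n => a n - b n.
Definition fps_scale (c : R) (a : fps) : fps := fun n => c * a n.
Definition fps_mul (a b : fps) : fps :=
  fun n => \sum_(k < n.+1) a k * b (n - k)%N.
Fixpoint fps_pow (a : fps) (k : nat) : fps :=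
  match k with 0 => fps_one | k'.+1 => fps_mul a (fps_pow a k') end.
(* composition f(g(t)), meaningful when g has zero constant term *)
Definition fps_comp (f g : fps) : fps :=
  fun n => \sum_(k < n.+1) f k * fps_pow g k n.
(* a(t)/t, meaningful when a has zero constant term *)
Definition fps_divX (a : fps) : fps := fun n => a n.+1.
(* multiplicative inverse of a series with nonzero constant term:
   b_0 = 1/a_0,  b_n = -(1/a_0) * sum_{k=1}^n a_k b_{n-k}  *)
Fixpoint fps_inv_aux (a : fps) (fuel n : nat) : R :=
  match fuel with
  | 0 => (a 0%N)^-1
  | fuel'.+1 =>
      if n is 0 then (a 0%N)^-1
      else - (a 0%N)^-1 * \sum_(k < n) a k.+1 * fps_inv_aux a fuel' (n - k.+1)%N
  end.
Definition fps_inv (a : fps) : fps := fun n => fps_inv_aux a n n.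

Definition fps_exp : fps := fun n => (n`!%:R)^-1.
Definition fps_cos : fps :=
  fun n => if odd n then 0 else (-1) ^+ (n./2) / n`!%:R.
Definition fps_log1p : fps :=
  fun n => if n is 0 then 0 else (-1) ^+ n.-1 / n%:R.

Definition log_lam (lam : R) : fps := fps_comp fps_log1p (fps_scale lam fps_X).
(* e_lam^x(t) = (1 + lam t)^(x/lam) = exp((x/lam) log(1+lam t)) *)
Definition e_lam (lam x : R) : fps := fps_comp fps_exp (fps_scale (x / lam) (log_lam lam)).
Definition cos_lam (lam y : R) : fps := fps_comp fps_cos (fps_scale (y / lam) (log_lam lam)).

Definition degCosBernoulli (lam x y : R) (n : nat) : R :=
  n`!%:R * fps_mul
    (fps_inv (fps_divX (fps_sub (e_lam lam (1/2)) (e_lam lam (-(1/2))))))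
    (fps_mul (e_lam lam x) (cos_lam lam y)) n.

Definition fps_expc (c : R) : fps := fps_comp fps_exp (fps_scale c fps_X).

Definition bernoulli2 (n : nat) (x : R) : R :=
  n`!%:R * fps_mul
    (fps_inv (fps_divX (fps_sub (fps_expc (1/2)) (fps_expc (-(1/2))))))
    (fps_expc x) n.

Definition stirling2 (n k : nat) : R :=
  n`!%:R * ((k`!%:R)^-1 * fps_pow (fps_sub fps_exp fps_one) k n).

End FPS.

(* Main.v *)
Require Import Defs.
From HB Require Import structures.
From mathcomp Require Import all_boot all_order all_algebra.
From mathcomp Require Import zify ring lra.
Unset Strict Implicit. Unset Printing Implicit Defensive.
Import Order.TTheory GRing.Theory Num.Theory.
Local Open Scope ring_scope.

Section Trunc.
Context {R : realFieldType}.
Implicit Types (p q : {poly R}) (a b f g : fps R).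

Definition T (N : nat) (a : fps R) : {poly R} := \poly_(i < N) a i.
Definition eqv (N : nat) p q := forall i, (i < N)%N -> p`_i = q`_i.

Lemma eqv_refl N p : eqv N p p. Proof. by []. Qed.
Lemma eqv_sym N p q : eqv N p q -> eqv N q p.
Proof. by move=> h i hi; rewrite h. Qed.
Lemma eqv_trans N p q r : eqv N p q -> eqv N q r -> eqv N p r.
Proof. by move=> h1 h2 i hi; rewrite h1 // h2. Qed.
Lemma eqv_le M N p q : (M <= N)%N -> eqv N p q -> eqv M p q.
Proof. by move=> hMN h i hi; apply: h; apply: leq_trans hMN. Qed.
Lemma eqvD N p q p' q' : eqv N p p' -> eqv N q q' -> eqv N (p + q) (p' + q').
Proof. by move=> h1 h2 i hi; rewrite !coefD h1 // h2. Qed.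
Lemma eqvB N p q p' q' : eqv N p p' -> eqv N q q' -> eqv N (p - q) (p' - q').
Proof. by move=> h1 h2 i hi; rewrite !coefB h1 // h2. Qed.
Lemma eqvZ N c p p' : eqv N p p' -> eqv N (c *: p) (c *: p').
Proof. by move=> h1 i hi; rewrite !coefZ h1. Qed.
Lemma eqvM N p q p' q' : eqv N p p' -> eqv N q q' -> eqv N (p * q) (p' * q').
Proof.
move=> h1 h2 i hi; rewrite !coefM; apply: eq_bigr => j _.
have hj : (j < N)%N by apply: leq_ltn_trans hi; rewrite -ltnS.
by rewrite h1 // h2 // (leq_ltn_trans (leq_subr _ _) hi).
Qed.
Lemma eqvX N p p' k : eqv N p p' -> eqv N (p ^+ k) (p' ^+ k).
Proof.
move=> h; elim: k => [|k IH]; first exact: eqv_refl.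
by rewrite !exprS; apply: eqvM.
Qed.

Lemma coefT N a i : (T N a)`_i = if (i < N)%N then a i else 0.
Proof. by rewrite coef_poly. Qed.

Lemma coef_pow_low p k i : p`_0 = 0 -> (i < k)%N -> (p ^+ k)`_i = 0.
Proof.
move=> p0; elim: k i => [//|k IH] i hi.
rewrite exprS coefM big1 // => -[j hj] _ /=.
case: j hj => [|j] hj; first by rewrite p0 mul0r.
by rewrite IH ?mulr0 //; lia.
Qed.

Lemma coef_comp_trunc p q i : q`_0 = 0 ->
  (p \Po q)`_i = \sum_(j < i.+1) p`_j * (q ^+ j)`_i.
Proof.
move=> q0; rewrite coef_comp_poly.
rewrite (big_ord_widen (maxn (size p) i.+1) (fun j => p`_j * (q ^+ j)`_i)) ?leq_maxl //.
rewrite (big_ord_widen (maxn (size p) i.+1) (fun j => p`_j * (q ^+ j)`_i)) ?leq_maxr //.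
rewrite big_mkcond [RHS]big_mkcond.
apply: eq_bigr => j _; case: ifP; case: ifP => //= h1 h2.
- by rewrite coef_pow_low ?mulr0 // ltnNge -ltnS h1.
- by rewrite nth_default ?mul0r // leqNgt h2.
Qed.

Lemma coef0_comp p q : q`_0 = 0 -> (p \Po q)`_0 = p`_0.
Proof. by move=> q0; rewrite coef_comp_trunc // big_ord1 expr0 coefC mulr1. Qed.

Lemma eqv_comp N p q p' q' : q`_0 = 0 -> q'`_0 = 0 ->
  eqv N p p' -> eqv N q q' -> eqv N (p \Po q) (p' \Po q').
Proof.
move=> q0 q'0 h1 h2 i hi; rewrite !coef_comp_trunc //; apply: eq_bigr => j _.
have hj : (j < N)%N by apply: leq_ltn_trans hi; rewrite -ltnS.
by rewrite h1 // (eqvX _ _ _ j h2).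
Qed.


Lemma T_mul N a b : eqv N (T N (fps_mul a b)) (T N a * T N b).
Proof.
move=> i hi; rewrite coefT hi coefM; apply: eq_bigr => -[j hj] _ /=.
have h1 : (j < N)%N by lia.
have h2 : (i - j < N)%N by lia.
by rewrite !coefT h1 h2.
Qed.

Lemma T_one N : eqv N (T N (fps_one R)) 1.
Proof. by move=> i hi; rewrite coefT hi coefC /fps_one; case: (i == 0)%N. Qed.

Lemma T_X N : eqv N (T N (fps_X R)) 'X.
Proof. by move=> i hi; rewrite coefT hi coefX /fps_X; case: (i == 1)%N. Qed.

Lemma T_pow N a k : eqv N (T N (fps_pow a k)) (T N a ^+ k).
Proof.
elim: k => [|k IH]; first exact: T_one.
apply: (eqv_trans _ _ _ _ (T_mul N a (fps_pow a k))); rewrite exprS; exact: eqvM.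
Qed.

Lemma T_add N a b : eqv N (T N (fps_add a b)) (T N a + T N b).
Proof. by move=> i hi; rewrite coefD !coefT hi. Qed.
Lemma T_sub N a b : eqv N (T N (fps_sub a b)) (T N a - T N b).
Proof. by move=> i hi; rewrite coefB !coefT hi. Qed.
Lemma T_scale N c a : eqv N (T N (fps_scale c a)) (c *: T N a).
Proof. by move=> i hi; rewrite coefZ !coefT hi. Qed.

Lemma T_comp N f g : g 0%N = 0 -> eqv N (T N (fps_comp f g)) (T N f \Po T N g).
Proof.
move=> g0 i hi; rewrite coefT hi coef_comp_trunc ?coefT ?g0; last by case: N hi.
apply: eq_bigr => -[j hj] _ /=.
have hj' : (j < N)%N by apply: leq_ltn_trans hi; rewrite -ltnS.
by rewrite coefT hj' -(T_pow N g j i hi) coefT hi.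
Qed.

Lemma T_divX N a : a 0%N = 0 -> eqv N (T N a) ('X * T N (fps_divX a)).
Proof.
move=> a0 i hi; rewrite coefXM coefT hi; case: i hi => [|i] hi //=.
by rewrite coefT (ltnW hi).
Qed.

Lemma inv_aux_fuel a fuel fuel' n : (n <= fuel)%N -> (n <= fuel')%N ->
  fps_inv_aux a fuel n = fps_inv_aux a fuel' n.
Proof.
elim: fuel fuel' n => [|f IH] [|f'] [|n] //= h1 h2.
congr (_ * _); apply: eq_bigr => -[k hk] _ /=; congr (_ * _); apply: IH; lia.
Qed.

Lemma fps_mul_inv a n : a 0%N != 0 -> fps_mul a (fps_inv a) n = fps_one R n.
Proof.
move=> a0; rewrite /fps_mul /fps_one big_ord_recl /= subn0.
case: n => [|n]; first by rewrite big_ord0 addr0 /fps_inv /= mulfV.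
rewrite /fps_inv /= mulNr mulrN mulrA mulfV // mul1r.
rewrite [X in - X + _ = _](_ : _ = \sum_(i < n.+1) a (bump 0 i) * fps_inv_aux a (n.+1 - bump 0 i) (n.+1 - bump 0 i)) ?addNr //.
apply: eq_bigr => -[k hk] _ /=; congr (_ * _); apply: inv_aux_fuel; rewrite /bump /=; lia.
Qed.

Lemma T_inv N a : a 0%N != 0 -> eqv N (T N a * T N (fps_inv a)) 1.
Proof.
move=> a0 i hi; rewrite -(T_mul N a (fps_inv a) i hi) -(T_one N i hi).
by rewrite !coefT hi fps_mul_inv.
Qed.


End Trunc.

Section B.
Context {R : realFieldType}.
Implicit Types (p q : {poly R}) (a b f g : fps R) (c : R).
Lemma eqv_deriv N p q : eqv N.+1 p q -> eqv N p^`() q^`().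
Proof. by move=> h i hi; rewrite !coef_deriv (h i.+1 hi). Qed.

Lemma eqv_integ N p q : p`_0 = q`_0 -> eqv N p^`() q^`() -> eqv N.+1 p q.
Proof.
move=> h0 h [|i] hi. by [].
have e : p^`()`_i = q^`()`_i by apply: h.
clear h; rewrite coef_deriv [q^`()`_i]coef_deriv -mulr_natr -[q`_i.+1 *+ _]mulr_natr in e.
by apply: (mulIf _ e); rewrite pnatr_eq0.
Qed.

Lemma coef_compZX p c i : (p \Po (c *: 'X))`_i = c ^+ i * p`_i.
Proof.
rewrite coef_comp_trunc; last by rewrite coefZ coefX mulr0.
rewrite big_ord_recr /= big1 ?add0r => [|[j hj] _ /=].
  by rewrite exprZn coefZ coefXn eqxx mulr1 mulrC.
by rewrite exprZn coefZ coefXn eq_sym (ltn_eqF hj) mulr0 mulr0.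
Qed.

Lemma fact_neq0 i : (i`!%:R : R) != 0.
Proof. by rewrite pnatr_eq0 -lt0n fact_gt0. Qed.

Lemma scaleX0 c : fps_scale c (fps_X R) 0%N = 0.
Proof. by rewrite /fps_scale /fps_X /= mulr0. Qed.

Lemma T_scaleX N c : eqv N (T N (fps_scale c (fps_X R))) (c *: 'X).
Proof. apply: (eqv_trans _ _ _ _ (T_scale _ _ _)); apply: eqvZ; apply: T_X. Qed.

Lemma T_comp_scaleX N f c : eqv N (T N (fps_comp f (fps_scale c (fps_X R)))) (T N f \Po (c *: 'X)).
Proof.
apply: (eqv_trans _ _ _ _ (T_comp _ _ _ (scaleX0 c))).
apply: eqv_comp; rewrite ?coefZ ?coefX ?mulr0 ?coefT ?scaleX0; first by case: (0 < N)%N.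
  by [].
  exact: eqv_refl.
exact: T_scaleX.
Qed.

Lemma T_expc_comp N c : eqv N (T N (fps_expc c)) (T N (fps_exp R) \Po (c *: 'X)).
Proof. exact: T_comp_scaleX. Qed.

Lemma coef_expc N c i : (i < N)%N -> (T N (fps_expc c))`_i = c ^+ i / i`!%:R.
Proof.
move=> hi; rewrite (T_expc_comp N c i hi) coef_compZX coefT hi /fps_exp.
by [].
Qed.

Lemma natmul_div (z : R) n : (z / n.+1%:R) *+ n.+1 = z.
Proof. by rewrite -mulr_natr divfK // pnatr_eq0. Qed.

Lemma log_exp N c : eqv N (T N (fps_log1p R) \Po (T N (fps_expc c) - 1)) (c *: 'X).
Proof.
case: N => [|M]; first by [].
set L := T M.+1 (fps_log1p R); set u := T M.+1 (fps_expc c) - 1.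
have u0 : u`_0 = 0 by rewrite coefB coef_expc // coefC /= expr0 divr1 subrr.
have F1 : eqv M ((1 + 'X) * L^`()) 1.
  move=> i hi; rewrite mulrDl mul1r coefD coefXM coefC.
  rewrite coef_deriv coefT.
  have hi1 : (i.+1 < M.+1)%N by [].
  rewrite hi1 /fps_log1p /= natmul_div.
  case: i hi hi1 => [|i] hi hi1 /=.
    by rewrite expr0 addr0.
  rewrite coef_deriv coefT ltnS (ltnW hi) natmul_div.
  by rewrite exprS mulN1r addNr.
have F2 : eqv M u^`() (c *: (1 + u)).
  move=> i hi; rewrite coef_deriv coefZ /u [1 + _]addrC subrK coefB coefC /= subr0.
  rewrite !coef_expc // 1?ltnW // factS natrM -mulr_natr exprS.
  by field; rewrite ?fact_neq0 //= nat1r pnatr_eq0.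
apply: (eqv_integ M).
  by rewrite coef0_comp // coefT /= /fps_log1p coefZ coefX mulr0.
rewrite deriv_comp derivZ derivX.
apply: (eqv_trans _ _ _ _ (eqvM _ _ _ _ _ (eqv_refl _ _) F2)).
have -> : (L^`() \Po u) * (c *: (1 + u)) = c *: (((1 + 'X) * L^`()) \Po u).
  by rewrite comp_polyM comp_polyD comp_polyX rmorph1 -scalerAr mulrC.
apply: eqvZ.
have h := eqv_comp M _ u _ u u0 u0 F1 (eqv_refl _ _).
have e1 : (1 : {poly R}) \Po u = 1 by rewrite -polyC1 comp_polyC.
by rewrite e1 in h.
Qed.
End B.

Section C.
Context {R : realFieldType}.
Implicit Types (p q : {poly R}) (a b f g : fps R) (c : R).

Lemma fps_comp0 f g : fps_comp f g 0%N = f 0%N.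
Proof. by rewrite /fps_comp big_ord1 /= /fps_one mulr1. Qed.

Lemma T0 N a : a 0%N = 0 -> (T N a)`_0 = 0.
Proof. by move=> a0; rewrite coefT a0; case: (0 < N)%N. Qed.

Lemma eqv_compr N p q q' : q`_0 = 0 -> q'`_0 = 0 -> eqv N q q' ->
  eqv N (p \Po q) (p \Po q').
Proof. by move=> h1 h2 h; apply: eqv_comp => //; apply: eqv_refl. Qed.

Lemma eqv_compl N p p' q : q`_0 = 0 -> eqv N p p' -> eqv N (p \Po q) (p' \Po q).
Proof. by move=> h1 h; apply: eqv_comp => //; apply: eqv_refl. Qed.

Lemma log1p0 : fps_log1p R 0%N = 0. Proof. by []. Qed.
Lemma loglam0 (lam : R) : log_lam lam 0%N = 0.
Proof. by rewrite /log_lam fps_comp0. Qed.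

Lemma expc0 c : fps_expc c 0%N = 1.
Proof. by rewrite /fps_expc fps_comp0 /fps_exp /= invr1. Qed.

Variable lam : R.
Hypothesis hlam : lam != 0.

Definition gg : fps R := fps_scale (1 / lam) (fps_sub (fps_expc lam) (fps_one R)).
Lemma gg0 : gg 0%N = 0.
Proof. by rewrite /gg /fps_scale /fps_sub expc0 /fps_one /= subrr mulr0. Qed.

Lemma Tg0 N : (T N gg)`_0 = 0. Proof. exact: T0 gg0. Qed.

Lemma lam_Tg N : eqv N (lam *: T N gg) (T N (fps_expc lam) - 1).
Proof.
move=> i hi; rewrite coefZ coefT hi /gg /fps_scale /fps_sub coefB (coefT _ (fps_expc lam)) hi.
rewrite mulrA div1r mulfV // mul1r; congr (_ - _).
by rewrite -(T_one N i hi) coefT hi.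
Qed.

Lemma loglam_g N : eqv N (T N (log_lam lam) \Po T N gg) (lam *: 'X).
Proof.
case: N => [|N]; first by [].
have h1 := T_comp_scaleX N.+1 (fps_log1p R) lam.
apply: (eqv_trans _ _ _ _ (eqv_compl _ _ _ _ (Tg0 N.+1) h1)).
rewrite -comp_polyA comp_polyZ comp_polyX.
apply: (eqv_trans _ _ _ _ _ (log_exp N.+1 lam)).
apply: eqv_compr; last exact: lam_Tg.
- by rewrite coefZ Tg0 mulr0.
- by rewrite coefB coefC coefT /= expc0 subrr.
Qed.


Lemma key_comp N f c :
  eqv N (T N (fps_comp f (fps_scale (c / lam) (log_lam lam))) \Po T N gg) (T N f \Po (c *: 'X)).
Proof.
set h := fps_scale (c / lam) (log_lam lam).
have h0 : h 0%N = 0 by rewrite /h /fps_scale loglam0 mulr0.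
apply: (eqv_trans _ _ _ _ (eqv_compl _ _ _ _ (Tg0 N) (T_comp N f h h0))).
rewrite -comp_polyA; apply: eqv_compr.
- by rewrite coef0_comp ?Tg0 ?T0.
- by rewrite coefZ coefX mulr0.
apply: (eqv_trans _ _ _ _ (eqv_compl _ _ _ _ (Tg0 N) (T_scale N (c / lam) (log_lam lam)))).
rewrite comp_polyZ; apply: (eqv_trans _ _ _ _ (eqvZ _ _ _ _ (loglam_g N))).
by rewrite scalerA divfK //; apply: eqv_refl.
Qed.

End C.

Section D.
Context {R : realFieldType}.
Implicit Types (p q : {poly R}) (a b f g : fps R) (c : R).

Lemma fps_comp1 f g : fps_comp f g 1%N = f 1%N * g 1%N.
Proof.
rewrite /fps_comp !big_ord_recr big_ord0 /= /fps_mul !big_ord_recr big_ord0 /= /fps_one /=.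
by rewrite !mulr0 !add0r mulr1.
Qed.

Lemma exp0 : fps_exp R 0%N = 1. Proof. by rewrite /fps_exp /= invr1. Qed.
Lemma exp1 : fps_exp R 1%N = 1. Proof. by rewrite /fps_exp /= invr1. Qed.

Lemma expc1 c : fps_expc c 1%N = c.
Proof. by rewrite /fps_expc fps_comp1 exp1 mul1r /fps_scale /fps_X /= mulr1. Qed.

Variable lam : R.
Hypothesis hlam : lam != 0.

Lemma elam0 z : e_lam lam z 0%N = 1.
Proof. by rewrite /e_lam fps_comp0 exp0. Qed.

Lemma elam1 z : e_lam lam z 1%N = z.
Proof.
rewrite /e_lam fps_comp1 exp1 mul1r /fps_scale /log_lam fps_comp1 /fps_scale /fps_X /=.
by rewrite divr1 expr0 mul1r mulr1 divfK.
Qed.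

Definition AA := fps_sub (e_lam lam (1/2)) (e_lam lam (-(1/2))).
Definition Dl := fps_divX AA.
Definition Ab := fps_sub (fps_expc (1/2 : R)) (fps_expc (-(1/2))).
Definition Db := fps_divX Ab.
Definition hh := fps_divX (gg lam).

Lemma AA0 : AA 0%N = 0. Proof. by rewrite /AA /fps_sub !elam0 subrr. Qed.
Lemma Ab0 : Ab 0%N = 0. Proof. by rewrite /Ab /fps_sub !expc0 subrr. Qed.
Lemma Dl0 : Dl 0%N = 1.
Proof. by rewrite /Dl /fps_divX /AA /fps_sub !elam1 opprK; field. Qed.
Lemma Db0 : Db 0%N = 1.
Proof. by rewrite /Db /fps_divX /Ab /fps_sub !expc1 opprK; field. Qed.


Lemma eqv_Xcancel K p q : eqv K.+1 ('X * p) ('X * q) -> eqv K p q.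
Proof. move=> h i hi; have e := h i.+1 hi; rewrite !coefXM /= in e; exact: e. Qed.

Lemma gg0' : gg lam 0%N = 0. Proof. exact: gg0. Qed.

Lemma elam_g N z : eqv N (T N (e_lam lam z) \Po T N (gg lam)) (T N (fps_expc z)).
Proof.
apply: (eqv_trans _ _ _ _ (key_comp lam hlam N (fps_exp R) z)).
apply: eqv_sym; exact: T_expc_comp.
Qed.

Lemma Dclaim K : eqv K (T K.+1 hh * (T K.+1 Dl \Po T K.+1 (gg lam))) (T K.+1 Db).
Proof.
apply: eqv_Xcancel.
set N := K.+1.
have e1 : eqv N (T N AA) ('X * T N Dl) := T_divX N AA AA0.
have e2 : eqv N (T N (gg lam)) ('X * T N hh) := T_divX N (gg lam) gg0'.
have e4 : eqv N (T N Ab) ('X * T N Db) := T_divX N Ab Ab0.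
have e3 : eqv N (T N AA \Po T N (gg lam)) (T N Ab).
  apply: (eqv_trans _ _ _ _ (eqv_compl _ _ _ _ (Tg0 lam N) (T_sub N _ _))).
  rewrite comp_polyB; apply: (eqv_trans _ _ _ _ _ (eqv_sym _ _ _ (T_sub N _ _))).
  by apply: eqvB; apply: elam_g.
apply: (eqv_trans _ _ _ _ _ e4); apply: (eqv_trans _ _ _ _ _ e3).
apply: eqv_sym; apply: (eqv_trans _ _ _ _ (eqv_compl _ _ _ _ (Tg0 lam N) e1)).
rewrite comp_polyM comp_polyX mulrA; apply: eqvM; last exact: eqv_refl.
exact: e2.
Qed.

Lemma T_one' N : eqv N (T N (fps_one R)) 1. Proof. exact: T_one. Qed.

Lemma comp1 q : (1 : {poly R}) \Po q = 1.
Proof. by rewrite -polyC1 comp_polyC. Qed.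

Lemma Iclaim K : eqv K (T K.+1 (fps_inv Dl) \Po T K.+1 (gg lam)) (T K.+1 hh * T K.+1 (fps_inv Db)).
Proof.
set N := K.+1; set I := T N (fps_inv Dl) \Po T N (gg lam); set Ib := T N (fps_inv Db).
set P := T N Dl \Po T N (gg lam); set Th := T N hh.
have i1 : eqv N (P * I) 1.
  have h := eqv_compl _ _ _ _ (Tg0 lam N) (T_inv N Dl (ltac:(by rewrite Dl0 oner_neq0))).
  by rewrite comp_polyM comp1 in h.
have i2 : eqv N (T N Db * Ib) 1 := T_inv N Db (ltac:(by rewrite Db0 oner_neq0)).
have d := Dclaim K.
apply: (eqv_trans _ _ (I * (T N Db * Ib))).
  rewrite -{1}[I]mulr1; apply: eqvM; first exact: eqv_refl.
  by apply: eqv_sym; apply: (eqv_le _ N) => //.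
apply: (eqv_trans _ _ (I * ((Th * P) * Ib))).
  apply: eqvM; first exact: eqv_refl.
  apply: eqvM; last exact: eqv_refl.
  by apply: eqv_sym; exact: d.
have -> : I * ((Th * P) * Ib) = (Th * Ib) * (P * I) by ring.
rewrite -[X in eqv _ _ X]mulr1; apply: eqvM; first exact: eqv_refl.
exact: (eqv_le _ N).
Qed.


Definition FF (x y : R) := fps_mul (fps_inv Dl) (fps_mul (e_lam lam x) (cos_lam lam y)).

Lemma Fclaim K x y : eqv K (T K.+1 (FF x y) \Po T K.+1 (gg lam))
  ((T K.+1 hh * T K.+1 (fps_inv Db)) * (T K.+1 (fps_expc x) * (T K.+1 (fps_cos R) \Po (y *: 'X)))).
Proof.
set N := K.+1.
have e1 : eqv N (T N (FF x y)) (T N (fps_inv Dl) * (T N (e_lam lam x) * T N (cos_lam lam y))).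
  apply: (eqv_trans _ _ _ _ (T_mul _ _ _)); apply: eqvM; first exact: eqv_refl.
  exact: T_mul.
apply: (eqv_trans _ _ _ _ (eqv_le _ N _ _ (leqnSn K) (eqv_compl _ _ _ _ (Tg0 lam N) e1))).
rewrite !comp_polyM; apply: eqvM; first exact: Iclaim.
apply: (eqv_le _ N) => //; apply: eqvM; first exact: elam_g.
exact: key_comp.
Qed.

End D.

Section E.
Context {R : realFieldType}.
Implicit Types (p q : {poly R}) (a b f g : fps R) (c : R).

Lemma sum_even (F : nat -> R) m :
  \sum_(j < m.+1) (if odd j then 0 else F j) = \sum_(l < m./2.+1) F (2 * l)%N.
Proof.
elim: m => [|m IH]; first by rewrite !big_ord1.
rewrite big_ord_recr /= IH.
have hm := odd_double_half m.
rewrite uphalf_half; case: (odd m) hm => /= hm.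
  rewrite [RHS]big_ord_recr /= add1n; congr (_ + F _).
  rewrite -hm -mul2n; lia.
by rewrite addr0.
Qed.

Lemma expc_coef c i : fps_expc c i = c ^+ i / i`!%:R.
Proof. by rewrite -(coef_expc i.+1 c i (ltnSn i)) coefT ltnSn. Qed.

Lemma binr n m : (m <= n)%N -> ('C(n, m)%:R : R) = n`!%:R / (m`!%:R * (n - m)`!%:R).
Proof.
move=> h; rewrite -(bin_fact h) !natrM mulfK //.
by rewrite mulf_neq0 // fact_neq0.
Qed.


Variable lam : R.
Hypothesis hlam : lam != 0.

Lemma powg_coef N k n : (n < N)%N ->
  lam ^+ k * ((T N (gg lam)) ^+ k)`_n = lam ^+ n * fps_pow (fps_sub (fps_exp R) (fps_one R)) k n.
Proof.
move=> hn.
have e1 : eqv N (lam *: T N (gg lam)) ((T N (fps_exp R) - 1) \Po (lam *: 'X)).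
  apply: (eqv_trans _ _ _ _ (lam_Tg lam hlam N)).
  rewrite comp_polyB comp1; apply: eqvB; [exact: T_expc_comp | exact: eqv_refl].
have e2 := eqvX _ _ _ k e1 n hn.
rewrite exprZn coefZ -rmorphXn /= coef_compZX in e2.
rewrite e2; congr (_ * _).
have e3 : eqv N (T N (fps_sub (fps_exp R) (fps_one R))) (T N (fps_exp R) - 1).
  apply: (eqv_trans _ _ _ _ (T_sub _ _ _)); apply: eqvB; [exact: eqv_refl | exact: T_one].
rewrite -(eqvX _ _ _ k e3 n hn) -(T_pow N _ k n hn) coefT hn //.
Qed.

End E.

Theorem theorem2p5 (R : realFieldType) (lam x y : R) (hlam : lam != 0) (n : nat) :
  \sum_(k < n.+1) lam ^+ (n - k)%N * degCosBernoulli lam x y k * stirling2 R n k =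
  \sum_(m < n.+1) \sum_(l < (m./2).+1)
     lam ^+ (n - m)%N / (n - m + 1)%N%:R * 'C(n, m)%:R * 'C(m, 2 * l)%:R
       * (-1) ^+ l * y ^+ (2 * l)%N * bernoulli2 (m - 2 * l)%N x.
Proof.
pose N := n.+2.
have L : \sum_(k < n.+1) lam ^+ (n - k)%N * degCosBernoulli lam x y k * stirling2 R n k
   = n`!%:R * (T N (FF lam x y) \Po T N (gg lam))`_n.
  rewrite coef_comp_trunc ?Tg0 // mulr_sumr; apply: eq_bigr => -[k hk] _ /=.
  have hkN : (k < N)%N by rewrite /N; lia.
  have hnN : (n < N)%N by rewrite /N; lia.
  rewrite coefT hkN /degCosBernoulli /stirling2.
  have hP := powg_coef lam hlam N k n hnN.
  set Y := ((T N (gg lam)) ^+ k)`_n in hP *; set P := fps_pow _ k n in hP *.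
  have -> : Y = lam ^+ (n - k) * P.
    by apply: (mulfI (expf_neq0 k hlam)); rewrite hP mulrA -exprD subnKC.
  rewrite /FF /Dl /AA.
  by field; rewrite fact_neq0.
rewrite L (Fclaim lam hlam n.+1 x y n (ltnSn n)).
set Th := T _ (hh lam); set Ib := T _ (fps_inv Db); set Tex := T _ (fps_expc x).
set Cy := _ \Po _.
have -> : Th * Ib * (Tex * Cy) = (Cy * (Ib * Tex)) * Th by ring.
rewrite coefM mulr_sumr; apply: eq_bigr => -[m hm] _ /=.
rewrite coefM.
rewrite (eq_bigr (fun j : 'I_m.+1 => if odd j then 0 else
     y ^+ j * ((-1) ^+ (j./2) / j`!%:R) * (Ib * Tex)`_(m - j))); last first.
  move=> [j hj] _ /=; rewrite /Cy coef_compZX coefT.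
  have -> : (j < n.+2)%N by lia.
  by rewrite /fps_cos; case: (odd j); rewrite ?mulr0 ?mul0r.
rewrite (sum_even (fun j => y ^+ j * ((-1) ^+ (j./2) / j`!%:R) * (Ib * Tex)`_(m - j))) mulr_suml mulr_sumr; apply: eq_bigr => -[l hl] _ /=.
have hl2 : (l.*2 <= m)%N.
  have := odd_double_half m; rewrite ltnS in hl; lia.
rewrite !mul2n doubleK.
rewrite -(T_mul n.+2 _ _ (m - l.*2)%N ltac:(lia)) coefT.
have -> : (m - l.*2 < n.+2)%N by lia.
rewrite /Th coefT.
have -> : (n - m < n.+2)%N by lia.
rewrite /hh /fps_divX /gg /fps_scale /fps_sub expc_coef /fps_one /= subr0.
rewrite /bernoulli2 /Db /Ab.
have hmn : (m <= n)%N by lia.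
rewrite (binr n m hmn) (binr m l.*2 hl2).
rewrite addn1 factS exprS !natrM.
by field; rewrite !fact_neq0 nat1r pnatr_eq0 hlam.
Qed.
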